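(* Let $\mu$ be the morphism on $\{0,1\}^*$ with $\mu(0)=01$, $\mu(1)=10$, let $A=\{00,11,010010,101101\}$ and $\mathcal{A}=\bigcup_{k\ge 0}\mu^k(A)$. Then the set of binary words that are squares and are $7/3$-power-free is exactly the set of conjugates of words in $\mathcal{A}$.
   Context: A finite word $w$ is an $\alpha$-power ($\alpha$ rational) if $w = x^n x'$ with $x$ nonempty, $x'$ a prefix of $x$, and $\alpha = n + |x'|/|x|$. A square is a word $xx$ with $x$ nonempty. A word is $\alpha$-power-free if none of its factors (contiguous subwords) is an $\alpha$-power. A conjugate of a word $x$ is any word $y$ such that $x=uv$ and $y=vu$ for some words $u,v$ (possibly empty). *)

(* Defs.v *)
(* Binary words are seq bool, with letter 0 = false, 1 = true. *)
From mathcomp Require Import all_boot all_order all_algebra.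
Set Implicit Arguments. Unset Strict Implicit. Unset Printing Implicit Defensive.
Import Order.TTheory GRing.Theory Num.Theory.

Definition word := seq bool.

Definition mu (w : word) : word := flatten (map (fun b => [:: b; ~~ b]) w).

Definition is_power (alpha : rat) (w : word) : Prop :=
  exists (x x' : word) (n : nat),
    [/\ x != [::], prefix x' x,
        w = flatten (nseq n x) ++ x' &
        alpha = (n%:R + (size x')%:R / (size x)%:R)%R].

Definition power_free (alpha : rat) (w : word) : Prop :=
  forall (y : word) (beta : rat), infix y w -> (alpha <= beta)%R -> ~ is_power beta y.

Definition square (w : word) : Prop := exists x : word, x != [::] /\ w = x ++ x.

Definition conjugate (y x : word) : Prop := exists u v : word, x = u ++ v /\ y = v ++ u.

Definition setA : seq word :=
  [:: [:: false; false]; [:: true; true];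
      [:: false; true; false; false; true; false];
      [:: true; false; true; true; false; true]].

Definition in_calA (x : word) : Prop := exists (k : nat) (a : word), a \in setA /\ x = iter k mu a.

(* Main.v *)
Require Import Defs.
From mathcomp Require Import all_boot all_order all_algebra.
From mathcomp Require Import zify.
Set Implicit Arguments. Unset Strict Implicit. Unset Printing Implicit Defensive.


Definition window (f : nat -> bool) i p L :=
  forall k, k + p < L -> f (i + k) = f (i + k + p).
Definition nobad (f : nat -> bool) B :=
  forall i p L, 0 < p -> 7 * p <= 3 * L -> L <= B -> ~ window f i p L.
Definition ext (t : word) i := nth false t (i %% size t).
Definition muf (g : nat -> bool) n := if odd n then ~~ g n./2 else g n./2.

Lemma ext_mod t i j : i = j %[mod size t] -> ext t i = ext t j.
Proof. by rewrite /ext => ->. Qed.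

Lemma ext_per t i : ext t (i + size t) = ext t i.
Proof. by apply: ext_mod; rewrite modnDr. Qed.

Lemma ext_nth t i : i < size t -> ext t i = nth false t i.
Proof. by move=> h; rewrite /ext modn_small. Qed.

Lemma size_mu t : size (mu t) = 2 * size t.
Proof. elim: t => [|b t IH] //=. rewrite /mu /= -/(mu t) IH; lia. Qed.

Lemma mu_cons b t : mu (b :: t) = b :: ~~ b :: mu t.
Proof. by []. Qed.

Lemma mu_cat u v : mu (u ++ v) = mu u ++ mu v.
Proof. by rewrite /mu map_cat flatten_cat. Qed.

Lemma iter_mu_cat k u v : iter k mu (u ++ v) = iter k mu u ++ iter k mu v.
Proof. by elim: k => //= k ->; rewrite mu_cat. Qed.

Lemma size_iter_mu k a : size (iter k mu a) = 2 ^ k * size a.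
Proof. elim: k => [|k IH] /=; first by rewrite mul1n. by rewrite size_mu IH expnS mulnA. Qed.

Lemma nth_mu t j : j < 2 * size t ->
  nth false (mu t) j = if odd j then ~~ nth false t j./2 else nth false t j./2.
Proof.
elim: t j => [|b t IH] j; first by case: j.
rewrite mu_cons; case: j => [|[|j]] //= Hj.
rewrite IH; last by lia.
by rewrite negbK; case: (odd j).
Qed.

Lemma muf_even g j : muf g j.*2 = g j.
Proof. by rewrite /muf odd_double doubleK. Qed.

Lemma muf_odd g j : muf g j.*2.+1 = ~~ g j.
Proof. by rewrite /muf /= odd_double /= uphalf_double. Qed.

Lemma muf_shift g m k : muf g (m.*2 + k) = muf (fun j => g (m + j)) k.
Proof.
rewrite /muf oddD odd_double /=.
have -> : (m.*2 + k)./2 = m + k./2 by lia.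
by [].
Qed.

Lemma ext_mu t i : t != [::] -> ext (mu t) i = muf (ext t) i.
Proof.
move=> tn; have N0 : 0 < size t by case: t tn.
rewrite /ext size_mu nth_mu; last by rewrite ltn_pmod // muln_gt0.
set r := i %% (2 * size t).
have Ei : i = i %/ (2 * size t) * (2 * size t) + r by rewrite /r -divn_eq.
have Hr : r < 2 * size t by rewrite /r ltn_pmod // muln_gt0.
set q := i %/ (2 * size t) in Ei.
have E2 : q * (2 * size t) = 2 * (q * size t) by rewrite mulnCA.
rewrite E2 in Ei; set m := q * size t in Ei.
have -> : odd r = odd i by rewrite Ei oddD oddM /=.
rewrite /muf.
have -> : i./2 = q * size t + r./2 by rewrite -/m; lia.
by rewrite modnMDl modn_small //; lia.
Qed.


Definition windowb (f : nat -> bool) i p L :=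
  all (fun k => f (i + k) == f (i + k + p)) (iota 0 (L - p)).

Lemma windowP f i p L : reflect (window f i p L) (windowb f i p L).
Proof.
apply: (iffP allP) => [H k Hk|H k].
  by apply/eqP/H; rewrite mem_iota; lia.
by rewrite mem_iota => Hk; apply/eqP/H; lia.
Qed.

Lemma nobad_eq f g B : (forall i, f i = g i) -> nobad f B -> nobad g B.
Proof.
move=> E H i p L hp h7 hL hw; apply: (H i p L hp h7 hL) => k hk.
by rewrite !E; apply: hw.
Qed.

Lemma nobad_mu g M : 2 <= M -> nobad g (2 * M) -> nobad (muf g) (4 * M).
Proof.
move=> HM Hg i p L hp h7 hL hw.
have Htr : forall j, g j = g (j + 1) -> g (j + 1) = g (j + 2) -> False.
  move=> j e1 e2; apply: (Hg j 1 3) => //; first lia.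
  move=> k hk; have [->|->] : k = 0 \/ k = 1 by lia.
    by rewrite addn0.
  by rewrite -addnA.
case Hp: (odd p).
-
  have [j Hj] : exists j0, i <= j0.*2 <= i + 1 by exists (i + 1)./2; lia.
  have [q Eq] : exists q, p = q.*2.+1.
    by exists p./2; rewrite -{1}(odd_double_half p) Hp add1n.
  have [p1|[p3|p5]] : p = 1 \/ (p = 3 \/ 5 <= p) by lia.
  + have := hw (j.*2 - i); rewrite (_ : i + (j.*2 - i) = j.*2); last by lia.
    rewrite p1 (addn1 j.*2) muf_even muf_odd => H; have := H ltac:(lia); by case: (g j).
  + rewrite p3 in hw h7.
    have [m [b [Ei Hb]]] : exists m b, i = m.*2 + b /\ b <= 1 by exists i./2, (odd i); lia.
    have W : forall k, k + 3 < L -> muf (fun j => g (m + j)) (b + k) = muf (fun j => g (m + j)) (b + k + 3).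
      move=> k hk; have := hw k hk; rewrite Ei -addnA muf_shift -!addnA muf_shift.
      by rewrite !addnA.
    have W0 := W 0 ltac:(lia); have W1 := W 1 ltac:(lia); have W2 := W 2 ltac:(lia);
    have W3 := W 3 ltac:(lia).
    clear W; case: b Hb Ei W0 W1 W2 W3 => [|[|b]] // _ _; rewrite /muf /=;
    case: (g (m + 0)); case: (g (m + 1)); case: (g (m+2)); case: (g (m + 3)) => //.
  + have W : forall t, t <= 3 -> muf (fun x => g (j + x)) t = muf (fun x => g (j + q + x)) t.+1.
      move=> t ht; have := hw (j.*2 - i + t) ltac:(lia).
      rewrite (_ : i + (j.*2 - i + t) = j.*2 + t); last by lia.
      rewrite (_ : j.*2 + t + p = (j + q).*2 + t.+1); last by lia.
      by rewrite !muf_shift.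
    have W0 := W 0 isT; have W1 := W 1 isT; have W2 := W 2 isT; have W3 := W 3 isT.
    move: W0 W1 W2 W3; rewrite /muf /= => W0 W1 W2 W3.
    move: (Htr (j + q)) W0 W1 W2 W3; rewrite !addn0.
    case: (g j); case: (g (j + 1)); case: (g (j + q)); case: (g (j + q + 1));
    case: (g (j + q + 2)) => /= H a b c d; (try discriminate); by apply: H.
- have [q Eq] : exists q, p = q.*2.
    by exists p./2; rewrite -{1}(odd_double_half p) Hp add0n.
  apply: (Hg i./2 q (minn ((i + L - 1)./2 - i./2 + 1) (2 * M))); try lia.
  move=> k hk; set j := i./2 + k.
  case: (leqP i j.*2) => h.
    have := hw (j.*2 - i) ltac:(lia).
    rewrite (_ : i + (j.*2 - i) = j.*2); last by lia.
    by rewrite Eq -doubleD !muf_even.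
  have := hw 0 ltac:(lia).
  rewrite (_ : i + 0 = j.*2.+1); last by lia.
  rewrite (_ : j.*2.+1 + p = (j + q).*2.+1); last by lia.
  by rewrite !muf_odd => /negb_inj.
Qed.


Definition checkb t B :=
  all (fun i => all (fun p => all (fun L => (7 * p <= 3 * L) ==> ~~ windowb (ext t) i p L)
     (iota 0 B.+1)) (iota 1 B)) (iota 0 (size t)).

Lemma window_mod t i p L : window (ext t) i p L -> window (ext t) (i %% size t) p L.
Proof.
move=> hw k hk; rewrite (@ext_mod t (i %% size t + k) (i + k)); last by rewrite modnDml.
rewrite (@ext_mod t (i %% size t + k + p) (i + k + p)); last by rewrite -addnA modnDml addnA.
exact: hw.
Qed.

Lemma check_nobad t B : 0 < size t -> checkb t B -> nobad (ext t) B.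
Proof.
move=> N0 /allP H i p L hp h7 hL /window_mod hw.
have /allP H1 := H (i %% size t) ltac:(by rewrite mem_iota add0n ltn_pmod).
have /allP H2 := H1 p ltac:(by rewrite mem_iota; lia).
have := H2 L ltac:(by rewrite mem_iota; lia).
by rewrite h7 /= => /windowP.
Qed.

Lemma nobad_check t B : nobad (ext t) B -> checkb t B.
Proof.
move=> H; apply/allP => i _; apply/allP => p; rewrite mem_iota => hp.
apply/allP => L; rewrite mem_iota => hL; apply/implyP => h7.
apply/windowP; apply: H; lia.
Qed.

Definition S4 : seq word := [:: [::false]; [::true]; [::false;true;false]; [::true;false;true]].

Lemma G_all k a : a \in S4 -> nobad (ext (iter k mu a)) (2 * size (iter k mu a)).
Proof.
move=> Ha.
have sz : forall k, 0 < size (iter k mu a).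
  by move=> k'; rewrite size_iter_mu muln_gt0 expn_gt0 /=; move: Ha; rewrite !inE => /or4P [] /eqP ->.
apply: check_nobad => //.
case: k => [|k].
  have : all (fun a => checkb (iter 0 mu a) (2 * size (iter 0 mu a))) S4 by vm_compute.
  by move/allP; apply.
elim: k => [|k IH].
  have : all (fun a => checkb (iter 1 mu a) (2 * size (iter 1 mu a))) S4 by vm_compute.
  by move/allP; apply.
apply: nobad_check.
rewrite iterS.
have tn : iter k.+1 mu a != [::] by move: (sz k.+1); case: (iter k.+1 mu a).
apply: (@nobad_eq (muf (ext (iter k.+1 mu a)))); first by move=> i; rewrite ext_mu.
rewrite size_mu mulnA.
apply: nobad_mu; first by rewrite size_iter_mu expnS -mulnA; move: (sz 0); rewrite /=; lia.
exact: check_nobad.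
Qed.


Ltac bash f := repeat match goal with |- context [f ?x] => case: (f x) end; rewrite /=; intuition; try discriminate.

Section Desub.
Variables (f : nat -> bool) (N : nat).
Hypothesis Hper : forall i, f (i + N) = f i.
Hypothesis HN : 7 <= N.
Hypothesis Hf : nobad f N.

Lemma nt i : f i = f i.+1 -> f i.+1 = f i.+2 -> False.
Proof.
move=> e1 e2; apply: (Hf (i:=i) (p:=1) (L:=3)) => //; try lia.
apply/windowP; rewrite /windowb /= ?addnS ?addn0.
by rewrite e1 e2 !eqxx.
Qed.

Lemma nalt i : f i != f i.+1 -> f i.+1 != f i.+2 -> f i.+2 != f i.+3 -> f i.+3 != f i.+4 -> False.
Proof.
move=> e1 e2 e3 e4; apply: (Hf (i:=i) (p:=2) (L:=5)) => //; try lia.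
apply/windowP; rewrite /windowb /= ?addnS ?addn0.
move: e1 e2 e3 e4; bash f.
Qed.

Definition dbl i := f i = f i.+1.

Lemma L3' m : dbl m.+1 -> dbl m.+4 -> False.
Proof.
rewrite /dbl => e1 e2; apply: (Hf (i:=m) (p:=3) (L:=7)) => //; try lia.
apply/windowP; rewrite /windowb /= ?addnS ?addn0.
move: (@nt m) (@nt m.+1) (@nt m.+2) (@nt m.+3) (@nt m.+4) e1 e2.
bash f.
Qed.

Lemma dbl_per i : dbl (i + N) <-> dbl i.
Proof. by rewrite /dbl -addSn !Hper. Qed.

Lemma L3 i : dbl i -> dbl i.+3 -> False.
Proof.
move=> /dbl_per d1 /dbl_per d2; apply: (@L3' (i + N).-1).
  by rewrite prednK //; lia.
by rewrite (_ : (i + N).-1.+4 = i.+3 + N) //; lia.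
Qed.

Lemma L1 i : dbl i -> dbl i.+1 -> False.
Proof. exact: nt. Qed.

Lemma L4 i : dbl i -> dbl i.+2 \/ dbl i.+4.
Proof.
move=> d; case: (@eqP _ (f i.+2) (f i.+3)) => [e|n2]; first by left.
case: (@eqP _ (f i.+4) (f i.+4.+1)) => [e|n4]; first by right.
exfalso; apply: (@nalt i.+1); apply/eqP.
- by move=> e; apply: (@L1 i).
- by [].
- by move=> e; apply: (@L3 i).
- by [].
Qed.

Lemma L5 j i : dbl i -> ~ dbl (i + j.*2.+1).
Proof.
elim/ltn_ind: j i => j IH i d.
case: j IH => [|[|j]] IH.
- by rewrite addn1; apply: L1.
- by rewrite (_ : i + 1.*2.+1 = i.+3); [apply: L3 | lia].
- case: (L4 d) => d'.
    by rewrite (_ : i + j.+2.*2.+1 = i.+2 + j.+1.*2.+1); [apply: IH | lia].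
  by rewrite (_ : i + j.+2.*2.+1 = i.+4 + j.*2.+1); [apply: IH | lia].
Qed.

Lemma L6 : exists d, dbl d.
Proof.
case: (@eqP _ (f 0) (f 1)) => [e|n0]; first by exists 0.
case: (@eqP _ (f 1) (f 2)) => [e|n1]; first by exists 1.
case: (@eqP _ (f 2) (f 3)) => [e|n2]; first by exists 2.
case: (@eqP _ (f 3) (f 4)) => [e|n3]; first by exists 3.
by exfalso; apply: (@nalt 0); apply/eqP.
Qed.

Lemma L7 d e : dbl d -> dbl e -> odd d = odd e.
Proof.
wlog le : d e / d <= e.
  move=> W dd de; case: (leqP d e) => h; first exact: W.
  by symmetry; apply: W => //; lia.
move=> dd de; case Ho: (odd (e - d)).
  have [j Ej] : exists j, e - d = j.*2.+1.
    by exists (e - d)./2; rewrite -{1}(odd_double_half (e - d)) Ho add1n.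
  by exfalso; apply: (@L5 j d dd); rewrite (_ : d + j.*2.+1 = e) //; lia.
have [j Ej] : exists j, e - d = j.*2.
  by exists (e - d)./2; rewrite -{1}(odd_double_half (e - d)) Ho add0n.
have -> : e = d + j.*2 by lia.
by rewrite oddD odd_double addbF.
Qed.

Lemma Neven : ~~ odd N.
Proof.
have [d dd] := L6.
have := L7 dd (proj2 (dbl_per d) dd).
by rewrite oddD; case: (odd d); case: (odd N).
Qed.

Lemma desub : exists r g, [/\ r <= 1, (forall n, f (r + n) = muf g n),
  N = (N./2).*2, (forall j, g (j + N./2) = g j) & nobad g N./2].
Proof.
have [d dd] := L6.
pose r : nat := ~~ odd d.
have nd : forall j, ~ dbl (r + j.*2).
  move=> j dj; have := L7 dd dj; rewrite oddD odd_double addbF /r oddb.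
  by case: (odd d).
pose g j := f (r + j.*2).
have fm : forall n, f (r + n) = muf g n.
  move=> n; rewrite /muf /g; case Ho: (odd n).
    rewrite (_ : r + n = (r + (n./2).*2).+1); last by lia.
    move: (nd n./2); rewrite /dbl.
    by case: (f (r + (n./2).*2)); case: (f (r + (n./2).*2).+1).
  by rewrite (_ : r + n = r + (n./2).*2); last by lia.
have NE : N = (N./2).*2 by have := Neven; lia.
exists r, g; split => //.
- by rewrite /r; case: (odd d).
- move=> j; rewrite /g (_ : r + (j + N./2).*2 = r + j.*2 + N) ?Hper //; lia.
move=> i p L hp h7 hL hw.
apply: (Hf (i:=r + i.*2) (p:=p.*2) (L:=L.*2)); try lia.
move=> k hk.
rewrite (_ : r + i.*2 + k + p.*2 = r + ((i + p).*2 + k)); last by lia.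
rewrite (_ : r + i.*2 + k = r + (i.*2 + k)); last by lia.
rewrite !fm !muf_shift /muf.
rewrite (_ : i + p + k./2 = i + k./2 + p); last by lia.
by rewrite hw //; lia.
Qed.

End Desub.


Definition S8 : seq word := [:: [::false]; [::true]; [::false;false]; [::true;true];
  [::false;true;false]; [::true;false;true];
  [::false;true;false;false;true;false]; [::true;false;true;true;false;true]].

Definition Concl f N := exists k a s, [/\ a \in S8, size (iter k mu a) = N &
  forall i, f i = ext (iter k mu a) (i + s)].

Definition cands := [seq (k, a) | k <- iota 0 3, a <- S8].

Definition concl_b (x : word) := has (fun ka => let t := iter ka.1 mu ka.2 in
  (size t == size x) && has (fun s => all (fun i => ext x i == ext t (i + s))
     (iota 0 (size x))) (iota 0 (size x))) cands.

Fixpoint allw n : seq word :=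
  if n is n'.+1 then [seq b :: x | b <- [:: false; true], x <- allw n'] else [:: [::]].

Lemma allw_mem x : x \in allw (size x).
Proof.
elim: x => [|b x IH] //=.
by rewrite !mem_cat; case: b; rewrite map_f ?orbT.
Qed.

Lemma base_check : all (fun n => all (fun x => checkb x n ==> concl_b x) (allw n)) (iota 1 6).
Proof. by vm_compute. Qed.

Lemma concl_of x : 0 < size x -> concl_b x -> Concl (ext x) (size x).
Proof.
move=> N0 /hasP [[k a]] /allpairsP [[k' a'] [_ /= Ha [-> ->]]] /= /andP [/eqP Hs] /hasP [s _] /allP Hi.
exists k', a', s; split => // i.
rewrite (@ext_mod x i (i %% size x)); last by rewrite modn_mod.
rewrite (eqP (Hi (i %% size x) _)); last by rewrite mem_iota add0n ltn_pmod.
by apply: ext_mod; rewrite Hs modnDml.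
Qed.

Lemma per_mul (f : nat -> bool) N : (forall i, f (i + N) = f i) -> forall c j, f (j + c * N) = f j.
Proof.
move=> Hp; elim=> [|c IH] j; first by rewrite addn0.
by rewrite mulSn (_ : j + (N + c * N) = (j + c * N) + N) ?Hp ?IH //; lia.
Qed.

Lemma per_ext (f : nat -> bool) N : 0 < N -> (forall i, f (i + N) = f i) -> forall i, f i = ext (mkseq f N) i.
Proof.
move=> N0 Hp i; rewrite /ext size_mkseq nth_mkseq; last by rewrite ltn_pmod.
by rewrite {1}(divn_eq i N) addnC per_mul.
Qed.

Lemma forward N (f : nat -> bool) : 0 < N -> (forall i, f (i + N) = f i) -> nobad f N -> Concl f N.
Proof.
elim/ltn_ind: N f => N IH f N0 Hper Hf.
case: (leqP N 6) => HN.
  set x := mkseq f N.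
  have E := per_ext N0 Hper.
  have sx : size x = N by rewrite size_mkseq.
  have Cb : checkb x N by apply: nobad_check; apply: nobad_eq Hf.
  have cb : concl_b x.
    have /allP H1 := base_check.
    have /allP H2 := H1 N ltac:(by rewrite mem_iota; lia).
    by have /implyP := H2 x ltac:(by rewrite -sx allw_mem); apply.
  have [k [a [s [Ha Hs Hi]]]] := @concl_of x ltac:(by rewrite sx) cb.
  exists k, a, s; split => //; first by rewrite Hs.
  by move=> i; rewrite E Hi.
have [r [g [Hr Hfg NE Hgp Hg]]] := desub Hper HN Hf.
have [k [a [s [Ha Hs Hi]]]] := IH N./2 ltac:(lia) g ltac:(lia) Hgp Hg.
exists k.+1, a, (N - r + s.*2); split => //.
  by rewrite iterS size_mu Hs; lia.
move=> i; rewrite iterS ext_mu; last by apply/eqP => E; rewrite E /= in Hs; lia.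
rewrite -Hper (_ : i + N = r + (i + N - r)); last by lia.
rewrite Hfg /muf.
have -> : odd (i + (N - r + s.*2)) = odd (i + N - r).
  by rewrite (_ : i + (N - r + s.*2) = i + N - r + s.*2); [rewrite oddD odd_double addbF | lia].
have -> : (i + (N - r + s.*2))./2 = (i + N - r)./2 + s by lia.
by rewrite -!Hi.
Qed.

Section RatSec.
Import Order.TTheory GRing.Theory Num.Theory.

Lemma size_flatten_nseq (x : word) n : size (flatten (nseq n x)) = n * size x.
Proof. by elim: n => //= n IH; rewrite size_cat IH mulSn. Qed.

Lemma nth_flatten_nseq (x : word) n k : 0 < size x -> k < n * size x ->
  nth false (flatten (nseq n x)) k = nth false x (k %% size x).
Proof.
move=> x0; elim: n k => [|n IH] k /=; first by rewrite mul0n.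
move=> hk; rewrite nth_cat; case: (ltnP k (size x)) => h.
  by rewrite modn_small.
rewrite IH; last by rewrite mulSn in hk; lia.
by congr nth; rewrite -{2}(subnK h) modnDr.
Qed.

Lemma R1 (n p : nat) : 0 < p -> ((7%:R / 3%:R : rat) <= n%:R / p%:R)%R = (7 * p <= 3 * n).
Proof.
move=> hp; rewrite ler_pdivlMr ?ltr0n // mulrAC ler_pdivrMr ?ltr0n //.
by rewrite -!natrM ler_nat mulnC [n * 3]mulnC.
Qed.

Lemma R2 (n r p : nat) : 0 < p -> (n%:R + r%:R / p%:R : rat)%R = ((n * p + r)%:R / p%:R)%R.
Proof.
move=> hp; rewrite natrD natrM mulrDl mulfK //.
by rewrite pnatr_eq0 -lt0n.
Qed.

End RatSec.

Lemma period_mod (y : word) p : 0 < p ->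
  (forall k, k + p < size y -> nth false y k = nth false y (k + p)) ->
  forall k, k < size y -> nth false y k = nth false y (k %% p).
Proof.
move=> hp H; elim/ltn_ind => k IH hk.
case: (ltnP k p) => h; first by rewrite modn_small.
rewrite -(subnK h) -H; last by rewrite subnK.
rewrite IH; [|lia|lia].
by rewrite modnDr.
Qed.

Lemma period_power (y : word) p : 0 < p -> p <= size y ->
  (forall k, k + p < size y -> nth false y k = nth false y (k + p)) ->
  is_power ((size y)%:R / p%:R)%R y.
Proof.
move=> hp hpy H.
have sx : size (take p y) = p by rewrite size_takel.
exists (take p y), (take (size y %% p) (take p y)), (size y %/ p); split.
- by rewrite -size_eq0 sx -lt0n.
- exact: prefix_take.
- apply: (@eq_from_nth _ false).
    rewrite size_cat size_flatten_nseq sx size_takel; last by rewrite sx; apply/ltnW/ltn_pmod.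
    by rewrite -divn_eq.
  move=> k hk; rewrite (period_mod hp H hk) nth_cat size_flatten_nseq sx.
  case: (ltnP k (size y %/ p * p)) => h.
    by rewrite nth_flatten_nseq sx // nth_take // ltn_pmod.
  have hr : k - size y %/ p * p < size y %% p.
    by move: hk; rewrite {1}(divn_eq (size y) p); lia.
  rewrite nth_take // nth_take; last by apply: leq_trans hr _; apply/ltnW/ltn_pmod.
  congr nth.
  by rewrite -{1}(subnK h) addnC modnMDl modn_small // (leq_trans hr) // ltnW // ltn_pmod.
- rewrite sx size_takel ?R2 -?divn_eq //; last by rewrite sx; apply/ltnW/ltn_pmod.
Qed.

Lemma not_free w (y : word) p : infix y w -> 0 < p -> 7 * p <= 3 * size y ->
  (forall k, k + p < size y -> nth false y k = nth false y (k + p)) ->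
  ~ power_free (7%:R / 3%:R)%R w.
Proof.
move=> Hi hp h7 H Hf; apply: (Hf y ((size y)%:R / p%:R)%R Hi); first by rewrite R1.
apply: period_power => //; lia.
Qed.

Lemma free_of w : (forall (y : word) p, infix y w -> 0 < p -> 7 * p <= 3 * size y ->
  (forall k, k + p < size y -> nth false y k = nth false y (k + p)) -> False) ->
  power_free (7%:R / 3%:R)%R w.
Proof.
move=> H y beta Hi Hb [x [x' [n [xn px' Ey Eb]]]].
have hp : 0 < size x by rewrite lt0n size_eq0.
have sx' : size x' <= size x by apply: size_prefix.
have ny : forall k, k < size y -> nth false y k = nth false x (k %% size x).
  move=> k; rewrite Ey size_cat size_flatten_nseq nth_cat size_flatten_nseq => hk.
  case: (ltnP k (n * size x)) => h; first by rewrite nth_flatten_nseq.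
  have ex' : take (size x') x = x' by move: px'; rewrite prefixE => /eqP.
  rewrite -{1}ex' nth_take; last by lia.
  congr nth; rewrite -{2}(subnK h) addnC modnMDl modn_small //; lia.
apply: (H y (size x)) => //.
  move: Hb; rewrite Eb R2 // -R1 //.
  by rewrite Ey size_cat size_flatten_nseq.
move=> k hk; rewrite !ny; [|lia|lia].
by rewrite modnDr.
Qed.


Lemma nth_xx (x : word) j : j < 2 * size x -> nth false (x ++ x) j = ext x j.
Proof.
move=> hj; rewrite nth_cat; case: (ltnP j (size x)) => h; first by rewrite ext_nth.
rewrite -ext_nth; last by lia.
by rewrite -ext_per subnK.
Qed.

Lemma ext_dbl (u : word) j : ext (u ++ u) j = ext u j.
Proof.
case: u => [|b u']; first by rewrite /ext.
set u := b :: u'.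
rewrite {1}/ext size_cat nth_xx; last by rewrite (leq_trans (ltn_pmod _ _)) //; lia.
by apply: ext_mod; rewrite modn_dvdm // dvdn_addr.
Qed.

Lemma rot_eq (x t : word) s : size t = size x -> 0 < size x ->
  (forall i, ext x i = ext t (i + s)) -> x = drop (s %% size x) t ++ take (s %% size x) t.
Proof.
move=> st x0 H; set s' := s %% size x.
have hs : s' < size x by rewrite ltn_pmod.
apply: (@eq_from_nth _ false).
  by rewrite size_cat size_drop size_take st hs; lia.
move=> i hi; rewrite -ext_nth // H (@ext_mod t (i + s) (i + s')); last by rewrite /s' st modnDmr.
rewrite nth_cat size_drop st; case: (ltnP i (size x - s')) => h.
  by rewrite nth_drop ext_nth; [rewrite addnC | rewrite st; lia].
rewrite nth_take; last by lia.
rewrite (_ : i + s' = (i - (size x - s')) + size t); last by lia.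
by rewrite ext_per ext_nth //; lia.
Qed.

Lemma nth_conj (t u v : word) j : t ++ t = u ++ v -> j < size (v ++ u) ->
  nth false (v ++ u) j = ext t (j + size u).
Proof.
move=> E hj.
have sz : size u + size v = 2 * size t by rewrite -size_cat -E size_cat; lia.
rewrite nth_cat; case: (ltnP j (size v)) => h.
  rewrite (_ : nth false v j = nth false (u ++ v) (j + size u)).
    by rewrite -E nth_xx //; lia.
  by rewrite nth_cat ltnNge leq_addl /= addnK.
rewrite (_ : nth false u (j - size v) = nth false (u ++ v) (j - size v)).
  rewrite -E nth_xx; last by rewrite size_cat in hj; lia.
  rewrite (_ : j + size u = (j - size v) + size t + size t); last by lia.
  by rewrite !ext_per.
by rewrite nth_cat ifT //; rewrite size_cat in hj; lia.
Qed.

Theorem theorem2 : forall w : word,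
  (square w /\ power_free (7%:R / 3%:R)%R w) <-> (exists x : word, in_calA x /\ conjugate w x).
Proof.
move=> w; split.
- case=> [[x [xn ->]] Hfree].
  have N0 : 0 < size x by rewrite lt0n size_eq0.
  have Hnb : nobad (ext x) (size x).
    move=> i p L hp h7 hL hw.
    set y := take L (drop (i %% size x) (x ++ x)).
    have hi : i %% size x < size x by rewrite ltn_pmod.
    have sy : size y = L by rewrite size_takel // size_drop size_cat; lia.
    apply: (@not_free (x ++ x) y p) => //; last 2 first.
    + by rewrite sy.
    + move=> k hk; rewrite sy in hk.
      rewrite !nth_take; [|lia|lia].
      rewrite !nth_drop !nth_xx; [|lia|lia].
      rewrite (@ext_mod x (i %% size x + k) (i + k)); last by rewrite modnDml.
      rewrite (@ext_mod x (i %% size x + (k + p)) (i + k + p)); last by rewrite -addnA modnDml.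
      by apply: hw.
    apply/infixP; exists (take (i %% size x) (x ++ x)), (drop L (drop (i %% size x) (x ++ x))).
    by rewrite /y !cat_take_drop.
  have [k [a [s [Ha Hs Hi]]]] := forward N0 (fun i => ext_per x i) Hnb.
  have H8 : all (fun a => (a \in S4) || has (fun e => a == e ++ e) S4) S8 by [].
  case/orP: (allP H8 a Ha) => [Ha4 | /hasP [e He /eqP Ea]].
  + exists (iter k mu (a ++ a)); split.
      exists k, (a ++ a); split => //.
      by move: Ha4; rewrite !inE => /or4P [] /eqP ->.
    rewrite iter_mu_cat; set t := iter k mu a.
    have Ex := rot_eq Hs N0 Hi.
    move: Ex; set s' := s %% size x => Ex.
    exists (take s' t), (drop s' t ++ t); split.
      by rewrite catA cat_take_drop.
    rewrite Ex -!catA; congr (_ ++ _).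
    by rewrite -{1}(cat_take_drop s' t) -!catA.
  + exfalso; move: Hi Hs; rewrite Ea iter_mu_cat; set te := iter k mu e => Hi Hs.
    have Hte : forall i, ext x i = ext te (i + s) by move=> i; rewrite Hi ext_dbl.
    rewrite size_cat in Hs.
    apply: (@not_free (x ++ x) (x ++ x) (size te)) => //.
    + exact: infix_refl.
    + lia.
    + rewrite size_cat; lia.
    move=> j hj; rewrite size_cat in hj.
    rewrite !nth_xx; [|lia|lia].
    by rewrite !Hte addnAC ext_per.
- case=> x' [[k [a0 [Ha0 ->]]] [u [v [Euv ->]]]].
  have [a [Ha Ea]] : exists a, a \in S4 /\ a0 = a ++ a.
    move: Ha0; rewrite !inE => /or4P [] /eqP ->.
    + by exists [:: false].
    + by exists [:: true].
    + by exists [:: false; true; false].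
    + by exists [:: true; false; true].
  move: Euv; rewrite Ea iter_mu_cat; set t := iter k mu a => Euv.
  have N0 : 0 < size t.
    by rewrite size_iter_mu muln_gt0 expn_gt0 /=; move: Ha; rewrite !inE => /or4P [] /eqP ->.
  have sw : size (v ++ u) = 2 * size t by rewrite size_cat addnC -size_cat -Euv size_cat; lia.
  split.
    exists (take (size t) (v ++ u)); split.
      by rewrite -size_eq0 size_takel; [lia | rewrite sw; lia].
    apply: (@eq_from_nth _ false).
      rewrite sw size_cat size_takel ?sw; lia.
    move=> j hj; rewrite [RHS]nth_cat size_takel ?sw; last by lia.
    case: (ltnP j (size t)) => h; first by rewrite nth_take.
    rewrite nth_take; last by lia.
    rewrite !(@nth_conj t u v _ Euv); [|rewrite sw; lia|rewrite sw; lia].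
    by rewrite (_ : j + size u = j - size t + size u + size t) ?ext_per //; lia.
  apply: free_of => y p Hin hp h7 Hy.
  case/infixP: Hin => [s1 [s2 E]].
  have G := @G_all k a Ha; rewrite -/t in G.
  have sy : size s1 + size y + size s2 = 2 * size t by rewrite -sw E !size_cat addnA.
  have ny : forall j, j < size y -> ext t (size s1 + size u + j) = nth false y j.
    move=> j hj.
    rewrite (_ : nth false y j = nth false (v ++ u) (size s1 + j)).
      by rewrite (@nth_conj t u v _ Euv); [congr ext; lia | rewrite sw; lia].
    by rewrite E nth_cat ltnNge leq_addr /= addKn nth_cat hj.
  apply: (G (size s1 + size u) p (size y)) => //; first by lia.
  move=> j hj; rewrite -[size s1 + size u + j + p]addnA !ny; [|lia|lia].
  by apply: Hy.
Qed.
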